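(* The functions $\Phi_\circ,\Phi_\bullet:\mathrm{NW}(\Delta)\to\mathrm{TXT}(\Delta)$ are unambiguously FO-definable (as transductions from nested-word structures to text structures).
   Context: Nested words: $\Delta$ finite alphabet. A nesting relation of width $n$ is a relation $\nu$ on $[n]$ with: $\nu(i,j)\Rightarrow i<j$; $\nu(i,j),\nu(i,j')\Rightarrow j=j'$ and $\nu(i,j),\nu(i',j)\Rightarrow i=i'$; $\nu(i,j),\nu(i',j'),i<i'\Rightarrow j<i'$ or $j'<j$. A nested word is $(w,\nu)$ with $w=a_1\cdots a_n\in\Delta^+$ and $\nu$ a nesting relation of width $n$; $\mathrm{NW}(\Delta)$ is their set; it is viewed as the structure with domain $[n]$, unary $\mathrm{Lab}_a=\{i:a_i=a\}$, natural order $\le$ and binary $\nu$. Factor $nw[i,j]=(a_i\cdots a_j,\{(k-i+1,\ell-i+1):(k,\ell)\in\nu,i\le k,\ell\le j\})$. Texts: a text is $(V,\lambda,\le_1,\le_2)$, $V$ finite nonempty, $\lambda:V\to\Delta$, $\le_1,\le_2$ linear orders, up to isomorphism; it is viewed as a structure with unary $\mathrm{Lab}_a$ and binary $\le_1,\le_2$. $\tau\circ\tau'$ (resp. $\tau\bullet\tau'$) is the disjoint union with all elements of $\tau$ before those of $\tau'$ in $\le_1$, and in $\le_2$ all of $\tau$ before $\tau'$ (resp. all of $\tau'$ before $\tau$). $\mathrm{TXT}(\Delta)$ (alternating texts) is the set of texts generated from singleton texts by $\circ$ and $\bullet$. $\Phi_\circ,\Phi_\bullet$: if $\nu=\emptyset$,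 $\Phi_\circ(nw)=a_1\circ\cdots\circ a_n$, $\Phi_\bullet(nw)=a_1\bullet\cdots\bullet a_n$; otherwise with $i$ the least call, $j$ its return, $nw'=nw[i+1,j-1]$, $nw''=nw[j+1,n]$: $\Phi_\circ(nw)=a_1\circ\cdots\circ a_{i-1}\circ(a_i\bullet\Phi_\bullet(nw')\bullet a_j)\circ\Phi_\circ(nw'')$, $\Phi_\bullet(nw)=a_1\bullet\cdots\bullet a_{i-1}\bullet(a_i\circ\Phi_\circ(nw')\circ a_j)\bullet\Phi_\bullet(nw'')$, omitting factors for empty intervals. Definability: for signatures $\sigma_1,\sigma_2=(R_i)_{i\in I}$, a 1-copying definition scheme with parameters $X_1..X_n$ is $\mathcal D=(\theta,\delta,(\varphi_i)_{i\in I})$ of classical MSO($\sigma_1$) formulas with free variables among $\{X_1..X_n\}$, $\{x_1,X_1..X_n\}$, $\{x_1..x_{\rho(R_i)},X_1..X_n\}$. For $s_1$ and $T_1..T_n$ with $s_1\models\theta[T_1..T_n]$, $\mathrm{def}_{\mathcal D}(s_1,\bar T)$ has domain $\{v:s_1\models\delta[v,\bar T]\}$ and $R_i=\{\bar v: s_1\models\varphi_i[\bar v,\bar T]\}$ (restricted to this domain). The transduction $\mathrm{def}_{\mathcal D}$ relates $s_1$ to all such $\mathrm{def}_{\mathcal D}(s_1,\bar T)$. $\mathcal D$ is unambiguous if for each related pair $(s_1,s_2)$ there is at most one $\bar T$ producing $s_2$. A (partial) function is unambiguously FO-definable if it equals $\mathrm{def}_{\mathcal D}$ for an unambiguous $\mathcal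 D$ all of whose formulas are first-order. *)

(* Defs.v *)
From Stdlib Require Import Bool.
From mathcomp Require Import all_boot.
Set Implicit Arguments. Unset Strict Implicit. Unset Printing Implicit Defensive.

Section Defs.
Variable Delta : finType.

(* A nested word: a word w over Delta and a relation nu on positions.
   Positions are 0-based: 0 .. size w - 1 (the paper's position i is our i-1). *)
Record nword := NWord { nw_word : seq Delta; nw_nest : rel nat }.

Definition is_nesting (n : nat) (nu : rel nat) : Prop :=
  (forall i j, nu i j -> i < j /\ j < n) /\
  (forall i j j', nu i j -> nu i j' -> j = j') /\
  (forall i i' j, nu i j -> nu i' j -> i = i') /\
  (forall i j i' j', nu i j -> nu i' j' -> i < i' -> j < i' \/ j' < j).

Definition is_nw (nw : nword) : Prop :=
  0 < size (nw_word nw) /\ is_nesting (size (nw_word nw)) (nw_nest nw).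

Record tstruct := TStruct {
  sdom : finType;
  slab : Delta -> pred sdom;
  sle1 : rel sdom;
  sle2 : rel sdom }.
Arguments slab : clear implicits.
Arguments sle1 : clear implicits.
Arguments sle2 : clear implicits.

Definition tiso (A B : tstruct) : Prop :=
  exists f : sdom A -> sdom B, bijective f /\
    (forall a x, slab B a (f x) = slab A a x) /\
    (forall x y, sle1 B (f x) (f y) = sle1 A x y) /\
    (forall x y, sle2 B (f x) (f y) = sle2 A x y).

Definition tsingle (a : Delta) : tstruct :=
  @TStruct unit (fun b _ => b == a) (fun _ _ => true) (fun _ _ => true).

Definition tempty : tstruct :=
  @TStruct void (fun _ _ => false) (fun _ _ => false) (fun _ _ => false).

Definition tsum (par : bool) (A B : tstruct) : tstruct :=
  @TStruct (sdom A + sdom B)%type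
    (fun a x => match x with inl y => slab A a y | inr y => slab B a y end)
    (fun x y => match x, y with
                | inl x, inl y => sle1 A x y | inr x, inr y => sle1 B x y
                | inl _, inr _ => true | inr _, inl _ => false end)
    (fun x y => match x, y with
                | inl x, inl y => sle2 A x y | inr x, inr y => sle2 B x y
                | inl _, inr _ => par | inr _, inl _ => ~~ par end).

Definition tcirc := tsum true.
Definition tbull := tsum false.

Inductive aterm := ASing of Delta | ACirc of aterm & aterm | ABull of aterm & aterm.

Fixpoint tstr_of (t : aterm) : tstruct :=
  match t with
  | ASing a => tsingle a
  | ACirc t u => tcirc (tstr_of t) (tstr_of u)
  | ABull t u => tbull (tstr_of t) (tstr_of u)
  end.

Definition tstr_of_opt (o : option aterm) : tstruct :=
  if o is Some t then tstr_of t else tempty.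

(* b = true : the operation o ; b = false : the operation . *)
Definition join (b : bool) (o1 o2 : option aterm) : option aterm :=
  match o1, o2 with
  | Some t, Some u => Some (if b then ACirc t u else ABull t u)
  | Some t, None => Some t
  | None, u => u
  end.

Definition chain (b : bool) (s : seq Delta) : option aterm :=
  foldr (fun a acc => join b (Some (ASing a)) acc) None s.

Section Phi.
Variable nw : nword.
Let w := nw_word nw.
Let nu := nw_nest nw.

Definition sub (i j : nat) : seq Delta := take (j - i) (drop i w).

(* phi fuel b i j = Phi_b of the factor on positions i .. j-1
   (None if the factor is empty) *)
Fixpoint phi (fuel : nat) (b : bool) (i j : nat) : option aterm :=
  match fuel with
  | 0 => None
  | fuel'.+1 =>
    if j <= i then None else
    let ks := iota i (j - i) in
    (* index of the least call of the factor (calls whose return is in the factor) *)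
    let idx := find (fun k => has (nu k) ks) ks in
    if idx == size ks then chain b (sub i j)
    else
      let k := i + idx in
      let l := i + find (nu k) ks in    (* its return *)
      let inner := join (~~ b) (join (~~ b) (chain (~~ b) (sub k k.+1))
                                            (phi fuel' (~~ b) k.+1 l))
                               (chain (~~ b) (sub l l.+1)) in
      join b (join b (chain b (sub i k)) inner) (phi fuel' b l.+1 j)
  end.

Definition PhiC : tstruct := tstr_of_opt (phi (size w) true 0 (size w)).
Definition PhiB : tstruct := tstr_of_opt (phi (size w) false 0 (size w)).
End Phi.

(* fo m k : first-order formulas with free set variables among X_0..X_(m-1)
   and free first-order variables among x_0 .. x_(k-1) (de Bruijn: the
   variable bound by the innermost quantifier is x_0). *)
Inductive fo (m : nat) : nat -> Type :=
| FLab k (a : Delta) (x : 'I_k) : fo m k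
| FLe k (x y : 'I_k) : fo m k
| FNu k (x y : 'I_k) : fo m k
| FEq k (x y : 'I_k) : fo m k
| FIn k (x : 'I_k) (X : 'I_m) : fo m k
| FNot k (f : fo m k) : fo m k
| FAnd k (f g : fo m k) : fo m k
| FEx k (f : fo m k.+1) : fo m k.

Definition env_ext (T : Type) k (v : 'I_k -> T) (p : T) : 'I_k.+1 -> T :=
  fun i => if unlift ord0 i is Some j then v j else p.

Definition env0 (T : Type) : 'I_0 -> T :=
  fun i => False_rect T ((@Bool.diff_false_true) (etrans (esym (ltn0 i)) (ltn_ord i))).
Definition env1 (T : Type) (x : T) : 'I_1 -> T := fun _ => x.
Definition env2 (T : Type) (x y : T) : 'I_2 -> T := fun i => if i == ord0 then x else y.

Section Sat.
Variable nw : nword.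
Let n := size (nw_word nw).
Let lab (i : 'I_n) : Delta := tnth (in_tuple (nw_word nw)) i.
Variable m : nat.
Variable T : 'I_m -> {set 'I_n}.

Fixpoint sat k (f : fo m k) : ('I_k -> 'I_n) -> bool :=
  match f in fo _ k return ('I_k -> 'I_n) -> bool with
  | FLab _ a x => fun v => lab (v x) == a
  | FLe _ x y => fun v => (v x <= v y)%N
  | FNu _ x y => fun v => nw_nest nw (v x) (v y)
  | FEq _ x y => fun v => v x == v y
  | FIn _ x X => fun v => v x \in T X
  | FNot _ f => fun v => ~~ sat f v
  | FAnd _ f g => fun v => sat f v && sat g v
  | FEx _ f => fun v => [exists p : 'I_n, sat f (env_ext v p)]
  end.
End Sat.

(* 1-copying FO definition scheme from the nested-word signature to the
   text signature, with m set parameters *)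
Record scheme (m : nat) := Scheme {
  sc_theta : fo m 0;
  sc_delta : fo m 1;
  sc_lab : Delta -> fo m 1;
  sc_le1 : fo m 2;
  sc_le2 : fo m 2 }.

Definition def_str m (D : scheme m) (nw : nword)
    (T : 'I_m -> {set 'I_(size (nw_word nw))}) : tstruct :=
  @TStruct {i : 'I_(size (nw_word nw)) | sat T (sc_delta D) (env1 i)}
    (fun a x => sat T (sc_lab D a) (env1 (val x)))
    (fun x y => sat T (sc_le1 D) (env2 (val x) (val y)))
    (fun x y => sat T (sc_le2 D) (env2 (val x) (val y))).

Definition theta_holds m (D : scheme m) (nw : nword)
    (T : 'I_m -> {set 'I_(size (nw_word nw))}) : bool :=
  sat T (sc_theta D) (@env0 _).

Arguments def_str [m] D nw T.
Arguments theta_holds [m] D nw T.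

Definition unambiguous m (D : scheme m) : Prop :=
  forall nw, is_nw nw ->
  forall T T', theta_holds D nw T -> theta_holds D nw T' ->
    tiso (def_str D nw T) (def_str D nw T') -> T = T'.

Definition defines m (D : scheme m) (Phi : nword -> tstruct) : Prop :=
  forall nw, is_nw nw ->
    (exists T, theta_holds D nw T) /\
    (forall T, theta_holds D nw T -> tiso (def_str D nw T) (Phi nw)).

Definition unamb_FO_definable (Phi : nword -> tstruct) : Prop :=
  exists m (D : scheme m), unambiguous D /\ defines D Phi.

End Defs.

(* Main.v *)
Require Import Defs.
From mathcomp Require Import all_boot zify.
From Stdlib Require Import FunctionalExtensionality.
Set Implicit Arguments. Unset Strict Implicit. Unset Printing Implicit Defensive.

Lemma inj_surj_bij (A B : finType) (f : A -> B) :
  injective f -> (forall y, exists x, f x = y) -> bijective f.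
Proof.
move=> fi fs; apply: inj_card_bij => //.
rewrite -(card_codom fi); apply: subset_leq_card; apply/subsetP => y _.
by have [x <-] := fs y; exact: codom_f.
Qed.

Section Tiso.
Variable Delta : finType.
Implicit Types A B C : tstruct Delta.

Lemma tiso_refl A : tiso A A.
Proof. exists id; split; first by exists id. by []. Qed.

Lemma tiso_sym A B : tiso A B -> tiso B A.
Proof.
case=> f [[g fK gK] [hl [h1 h2]]]; exists g; split; first by exists f.
split; first by move=> a x; rewrite -(hl a (g x)) gK.
split; move=> x y; [rewrite -(h1 (g x)) | rewrite -(h2 (g x))]; by rewrite !gK.
Qed.

Lemma tiso_trans A B C : tiso A B -> tiso B C -> tiso A C.
Proof.
case=> f [fb [fl [f1 f2]]] [g [gb [gl [g1 g2]]]]; exists (g \o f); split.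
  exact: bij_comp.
by split=> [a x|]; [|split=> x y] => /=; rewrite ?gl ?fl ?g1 ?f1 ?g2 ?f2.
Qed.

Lemma tiso_sum b A A' B B' : tiso A A' -> tiso B B' -> tiso (tsum b A B) (tsum b A' B').
Proof.
case=> f [[f' fK f'K] [fl [f1 f2]]] [g [[g' gK g'K] [gl [g1 g2]]]].
exists (fun x => match x with inl y => inl (f y) | inr y => inr (g y) end); split.
  exists (fun x => match x with inl y => inl (f' y) | inr y => inr (g' y) end).
    by case=> y; rewrite ?fK ?gK.
  by case=> y; rewrite ?f'K ?g'K.
split; first by move=> a [y|y] /=.
by split=> [] [x|x] [y|y] /=.
Qed.

Lemma tiso_sum_empty_r b A : tiso (tsum b A (tempty Delta)) A.
Proof.
apply: tiso_sym; exists inl; split.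
  apply: inj_surj_bij; first by move=> x y [].
  by case=> y; [exists y| case: y].
by split=> [a x|]; [|split=> x y].
Qed.

Lemma tiso_sum_empty_l b B : tiso (tsum b (tempty Delta) B) B.
Proof.
apply: tiso_sym; exists inr; split.
  apply: inj_surj_bij; first by move=> x y [].
  by case=> y; [case: y| exists y].
by split=> [a x|]; [|split=> x y].
Qed.

Lemma tiso_join b (o1 o2 : option (aterm Delta)) :
  tiso (tstr_of_opt (join b o1 o2)) (tsum b (tstr_of_opt o1) (tstr_of_opt o2)).
Proof.
case: o1 => [t|] /=; last first.
  by apply: tiso_sym; apply: tiso_sum_empty_l.
case: o2 => [u|] /=; last by apply: tiso_sym; apply: tiso_sum_empty_r.
by case: b; apply: tiso_refl.
Qed.
End Tiso.
Section PS.
Variable Delta : finType.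
Variable nw : nword Delta.
Local Notation w := (nw_word nw).
Local Notation n := (size (nw_word nw)).
Variable sem : nat -> nat -> bool.

Definition PS (i j : nat) : tstruct Delta :=
  @TStruct Delta {p : 'I_n | i <= p < j}
    (fun a p => tnth (in_tuple w) (val p) == a)
    (fun p q => val p <= val q) (fun p q => sem (val p) (val q)).

Lemma PS_empty i j : j <= i -> tiso (tempty Delta) (PS i j).
Proof.
move=> hji; exists (@of_void _); split; last by split=> [a []|]; split=> -[].
apply: inj_surj_bij; first by case.
case=> p hp; case/andP: (hp) => h1 h2; exfalso; move: (leq_trans h2 (leq_trans hji h1)).
by rewrite ltnn.
Qed.


Lemma PS_single' k (hk : k < n) a : sem k k -> tiso (tsingle (nth a w k)) (PS k k.+1).
Proof.
move=> hs.
have H : k <= Ordinal hk < k.+1 by rewrite /= leqnn ltnSn.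
exists (fun _ => exist _ (Ordinal hk) H); split.
  apply: inj_surj_bij; first by case=> -[].
  case=> p hp; exists tt; apply: val_inj; apply: val_inj => /=.
  by case/andP: hp => h1 h2; apply/eqP; rewrite eqn_leq h1 -ltnS h2.
split; first by move=> b [] /=; rewrite (tnth_nth a) eq_sym.
by split=> -[] [] /=; rewrite ?leqnn.
Qed.

Lemma PS_split b i k j : i <= k -> k <= j ->
  (forall p q, i <= p -> p < k -> k <= q -> q < j -> sem p q = b /\ sem q p = ~~ b) ->
  tiso (tsum b (PS i k) (PS k j)) (PS i j).
Proof.
move=> hik hkj hs.
have w1 (p : 'I_n) : i <= p < k -> i <= p < j.
  by case/andP=> h1 h2; rewrite h1 (leq_trans h2 hkj).
have w2 (p : 'I_n) : k <= p < j -> i <= p < j.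
  by case/andP=> h1 h2; rewrite h2 (leq_trans hik h1).
exists (fun x => match x with inl y => exist _ (val y) (w1 _ (valP y))
                      | inr y => exist _ (val y) (w2 _ (valP y)) end); split.
  apply: inj_surj_bij.
    move=> [x|x] [y|y] /= /(congr1 val) /= e.
    - by congr inl; apply: val_inj.
    - have := valP x; have := valP y; rewrite /= e => /andP [h1 _] /andP [_ h2].
      by move: (leq_trans h2 h1); rewrite ltnn.
    - have := valP x; have := valP y; rewrite /= e => /andP [_ h2] /andP [h1 _].
      by move: (leq_trans h2 h1); rewrite ltnn.
    - by congr inr; apply: val_inj.
  case=> p hp; case: (ltnP (val p) k) => hpk.
    have hp' : i <= p < k by case/andP: hp => -> _.
    by exists (inl (exist _ p hp')); apply: val_inj.
  have hp' : k <= p < j by case/andP: hp => _ ->; rewrite hpk.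
  by exists (inr (exist _ p hp')); apply: val_inj.
split; first by move=> a [] [].
split=> -[] [p hp] [] [q hq] //=.
- case/andP: hp => _ h1; case/andP: hq => h2 _; exact: ltnW (leq_trans h1 h2).
- case/andP: hq => _ h1; case/andP: hp => h2 _; apply/negbTE.
  by rewrite -ltnNge (leq_trans h1 h2).
- case/andP: hp => h1 h2; case/andP: hq => h3 h4; by case: (hs p q h1 h2 h3 h4).
- case/andP: hp => h1 h2; case/andP: hq => h3 h4; case: (hs q p h3 h4 h1 h2) => _ ->.
  by case: b {hs}.
Qed.

Lemma sub_cons a i j : i < j -> j <= n -> sub nw i j = nth a w i :: sub nw i.+1 j.
Proof.
move=> hij hjn; rewrite /sub (drop_nth a); last exact: leq_trans hij hjn.
by rewrite subnS -(subnSK hij) /=.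
Qed.

Lemma chain_PS b i j : i <= j -> j <= n ->
  (forall p q, i <= p -> p < q -> q < j -> sem p q = b /\ sem q p = ~~ b) ->
  (forall p, sem p p) ->
  tiso (tstr_of_opt (chain b (sub nw i j))) (PS i j).
Proof.
move=> hij hjn hs hr.
move: (ltnSn (j - i)); move: {2}(j - i).+1 => m.
elim: m i hij hs => // m IH i hij hs hm.
case: (ltnP i j) => hlt; last first.
  have -> : sub nw i j = [::] by rewrite /sub (eqP hlt) take0.
  exact: PS_empty.
have hin : i < n by exact: leq_trans hlt hjn.
pose a := nth (tnth (in_tuple w) (Ordinal hin)) w i.
rewrite (sub_cons (tnth (in_tuple w) (Ordinal hin)) hlt hjn).
apply: tiso_trans; first exact: (tiso_join b (Some (ASing _)) (chain b (sub nw i.+1 j))).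
apply: tiso_trans; last apply: (PS_split (k := i.+1)) => //.
  apply: tiso_sum; first exact: PS_single'.
  apply: IH => //; try lia.
  by move=> p q h1 h2 h3; apply: hs => //; apply: ltnW.
by move=> p q h1 h2 h3 h4; apply: hs => //; apply: leq_trans h3.
Qed.
End PS.
Section Nest.
Variable Delta : finType.
Variable nw : nword Delta.
Local Notation w := (nw_word nw).
Local Notation n := (size (nw_word nw)).
Local Notation nu := (nw_nest nw).
Hypothesis Hn : is_nesting n nu.

Lemma N1 c r : nu c r -> c < r /\ r < n.
Proof. by case: Hn => h _; apply: h. Qed.
Lemma N2 c r r' : nu c r -> nu c r' -> r = r'.
Proof. by case: Hn => _ [h _]; apply: h. Qed.
Lemma N3 c c' r : nu c r -> nu c' r -> c = c'.
Proof. by case: Hn => _ [_ [h _]]; apply: h. Qed.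
Lemma N4 c r c' r' : nu c r -> nu c' r' -> c < c' -> r < c' \/ r' < r.
Proof. by case: Hn => _ [_ [_ h]]; apply: h. Qed.

Lemma notboth a x y : nu a x -> nu x y -> False.
Proof.
move=> h1 h2; have [l1 _] := N1 h1; have [l2 _] := N1 h2.
case: (N4 h1 h2 l1); rewrite ?ltnn //; move=> h; move: (ltn_trans l2 h); by rewrite ltnn.
Qed.

Lemma inside k l c r : nu k l -> nu c r -> k < c -> c < l -> r < l.
Proof. move=> h1 h2 h3 h4; case: (N4 h1 h2 h3) => //; by rewrite ltnNge ltnW. Qed.

Lemma encl c' r' c r : nu c' r' -> nu c r -> c' < c -> c < r' -> r < r'.
Proof. move=> h1 h2 h3 h4; case: (N4 h1 h2 h3) => //; by rewrite ltnNge ltnW. Qed.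

Definition call c := has (nu c) (iota 0 n).
Definition enc p q c := (c <= p) && has (fun r => nu c r && (q <= r)) (iota 0 n).
Definition maxW p q c := enc p q c && ~~ has (fun c' => (c < c') && enc p q c') (iota 0 n).
Definition SE c c' := (c' < c) && enc c c.+1 c'.
Definition maxSE c c' := SE c c' && ~~ has (fun c'' => (c' < c'') && SE c c'') (iota 0 n).
Fixpoint parF fuel c := if fuel is f.+1 then
  ~~ has (fun c' => maxSE c c' && parF f c') (iota 0 n) else true.
Definition par c := parF c.+1 c.
Definition d p q := has (fun c => maxW p q c && par c) (iota 0 n).
Definition sv b0 p q := b0 (+) d p q.
Definition semb b0 p q := if p == q then true else if p < q then sv b0 p q else ~~ sv b0 q p.

Lemma callP c : reflect (exists r, nu c r) (call c).
Proof.
apply: (iffP hasP) => [[r _ h]|[r h]]; first by exists r.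
by exists r => //; rewrite mem_iota add0n; case: (N1 h).
Qed.

Lemma encP p q c : reflect (c <= p /\ exists r, nu c r /\ q <= r) (enc p q c).
Proof.
apply: (iffP andP) => [[h /hasP [r _ /andP [h1 h2]]]|[h [r [h1 h2]]]].
  by split => //; exists r.
split => //; apply/hasP; exists r; last by rewrite h1.
by rewrite mem_iota add0n; case: (N1 h1).
Qed.

Lemma enc_lt p q c : enc p q c -> c < n.
Proof. by case/encP => _ [r [h _]]; case: (N1 h) => h1 h2; apply: ltn_trans h2. Qed.

Lemma memn c : c < n -> c \in iota 0 n.
Proof. by rewrite mem_iota add0n. Qed.

Lemma maxW_uniq p q c1 c2 : maxW p q c1 -> maxW p q c2 -> c1 = c2.
Proof.
case/andP => e1 n1 /andP [e2 n2]; case: (ltngtP c1 c2) => // h.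
  by case/hasP: n1; exists c2; [apply: memn; apply: enc_lt e2 | rewrite h].
by case/hasP: n2; exists c1; [apply: memn; apply: enc_lt e1 | rewrite h].
Qed.

Lemma d_maxW p q c : maxW p q c -> d p q = par c.
Proof.
move=> hm; apply/hasP/idP => [[c' _ /andP [h1 h2]]|h].
  by rewrite -(maxW_uniq h1 hm).
exists c; last by rewrite hm.
by apply: memn; case/andP: hm => /enc_lt.
Qed.

Lemma maxSE_uniq c c1 c2 : maxSE c c1 -> maxSE c c2 -> c1 = c2.
Proof.
case/andP => e1 n1 /andP [e2 n2]; case: (ltngtP c1 c2) => // h.
  by case/hasP: n1; exists c2; [apply: memn; case/andP: e2 => _ /enc_lt | rewrite h].
by case/hasP: n2; exists c1; [apply: memn; case/andP: e1 => _ /enc_lt | rewrite h].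
Qed.

Lemma parF_fuel f g c : c < f -> c < g -> parF f c = parF g c.
Proof.
elim: f g c => // f IH [|g] c // hf hg /=; congr negb; apply: eq_has => c' /=.
case h: (maxSE c c') => //=; apply: IH.
  by case/andP: h => /andP [h1 _] _; lia.
by case/andP: h => /andP [h1 _] _; lia.
Qed.

Lemma par_eq c : par c = ~~ has (fun c' => maxSE c c' && par c') (iota 0 n).
Proof.
rewrite /par /=; congr negb; apply: eq_has => c' /=.
case h: (maxSE c c') => //=; rewrite (@parF_fuel c c'.+1 c') //.
by case/andP: h => /andP [h1 _] _.
Qed.

Lemma par_maxSE c c' : maxSE c c' -> par c = ~~ par c'.
Proof.
move=> hm; rewrite par_eq; congr negb.
apply/hasP/idP => [[c'' _ /andP [h1 h2]]|h].
  by rewrite -(maxSE_uniq h1 hm).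
exists c'; last by rewrite hm.
by apply: memn; case/andP: hm => /andP [_ /enc_lt].
Qed.

Lemma semb_refl b0 p : semb b0 p p.
Proof. by rewrite /semb eqxx. Qed.

Lemma semb_lt b0 p q : p < q -> semb b0 p q = sv b0 p q /\ semb b0 q p = ~~ sv b0 p q.
Proof.
move=> h; rewrite /semb h (ltn_eqF h) eq_sym (ltn_eqF h).
by rewrite ltnNge (ltnW h).
Qed.

Definition closed i j := forall c r, nu c r -> (i <= c < j) = (i <= r < j).

Definition Inv b0 b i j :=
  (forall p q, i <= p -> p < q -> q < j -> (forall c, i <= c -> ~~ enc p q c) ->
     d p q = b0 (+) b) /\
  (forall c, i <= c -> c < j -> call c -> (forall c', i <= c' -> ~~ SE c c') ->
     par c = ~~ (b0 (+) b)).

End Nest.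
Section Main.
Variable Delta : finType.
Variable nw : nword Delta.
Local Notation w := (nw_word nw).
Local Notation n := (size (nw_word nw)).
Local Notation nu := (nw_nest nw).
Hypothesis Hn : is_nesting n nu.
Variable b0 : bool.
Local Notation PSb := (PS nw (semb nw b0)).

Lemma semb_goal p q b : p < q -> sv nw b0 p q = b ->
  semb nw b0 p q = b /\ semb nw b0 q p = ~~ b.
Proof. by move=> h e; have [-> ->] := semb_lt nw b0 h; rewrite e. Qed.

Lemma K1 i j k l : closed nw i j -> i <= k -> nu k l ->
  (forall c, i <= c -> c < k -> forall r, ~~ nu c r) ->
  forall c r, i <= c -> c <= l -> nu c r -> r <= l.
Proof.
move=> hcl hik hkl hnc c r hic hcl' hcr.
case: (ltngtP c k) => hck.
- by move: (hnc c hic hck r); rewrite hcr.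
- case: (ltngtP c l) => hcl2.
  + exact: ltnW (inside Hn hkl hcr hck hcl2).
  + by move: hcl'; rewrite leqNgt hcl2.
  + by rewrite hcl2 in hcr; case: (notboth Hn hkl hcr).
- by rewrite hck in hcr; rewrite (N2 Hn hcr hkl).
Qed.

Lemma phi_PS fuel : forall b i j, j - i <= fuel -> i <= j -> j <= n -> closed nw i j ->
  Inv nw b0 b i j -> tiso (tstr_of_opt (phi nw fuel b i j)) (PSb i j).
Proof.
elim: fuel => [|fuel IH] b i j hf hij hjn hcl hinv.
  have -> : j = i by lia.
  exact: PS_empty.
rewrite /=. case: leqP => hji.
  have -> : j = i by lia.
  exact: PS_empty.
set ks := iota i (j - i).
have memks c : (c \in ks) = (i <= c < j).
  rewrite mem_iota; congr andb; apply/idP/idP; lia.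
have hsz : size ks = j - i by rewrite size_iota.
case: (hinv) => hinv1 hinv2.
set idx := find (fun k => has (nu k) ks) ks.
case: eqP => hidx.
  have hnh : ~~ has (fun k => has (nu k) ks) ks by rewrite has_find -/idx hidx ltnn.
  apply: chain_PS => //; last exact: semb_refl.
  move=> p q hip hpq hqj; apply: (semb_goal hpq).
  rewrite /sv hinv1; [by rewrite addbA addbb|lia|lia|lia|].
  move=> c hic; apply/negP => /(encP Hn) [hcp [r [hcr hqr]]].
  case/hasP: hnh; exists c; first by rewrite memks hic; lia.
  apply/hasP; exists r => //; rewrite memks -(hcl _ _ hcr) hic; lia.
have hlt : idx < j - i by rewrite -hsz ltn_neqAle (introN eqP hidx) find_size.
have hP := @nth_find _ 0 (fun k => has (nu k) ks) ks.
rewrite has_find -/idx hsz hlt nth_iota // in hP.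
have {}hP := hP isT.
set k := i + idx in hP *.
set l := i + find (nu k) ks.
have hl : find (nu k) ks < j - i by rewrite -hsz -has_find.
have hkl : nu k l.
  by have := @nth_find _ 0 (nu k) ks hP; rewrite nth_iota.
have hnc : forall c, i <= c -> c < k -> forall r, ~~ nu c r.
  move=> c hic hck r; apply/negP => hcr.
  have := @before_find _ 0 (fun k => has (nu k) ks) ks (c - i).
  rewrite -/idx nth_iota; last lia.
  have -> : i + (c - i) = c by lia.
  move=> /(_ ltac:(lia)) /negP; apply; apply/hasP; exists r => //.
  rewrite memks -(hcl _ _ hcr); lia.
have [hkl1 _] := N1 Hn hkl.
have hik : i <= k by rewrite /k leq_addr.
have hlj : l < j by rewrite /l; lia.
have K := K1 hcl hik hkl hnc.
have noenc_r p q : i <= p -> l < q -> forall c, i <= c -> c <= l -> ~~ enc nw p q c.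
  move=> hip hlq c hic hcl' ; apply/negP => /(encP Hn) [hcp [r [hcr hqr]]].
  by have := K c r hic hcl' hcr; lia.
have noenc_l p q : p < k -> forall c, i <= c -> ~~ enc nw p q c.
  move=> hpk c hic; apply/negP => /(encP Hn) [hcp [r [hcr hqr]]].
  by move: (hnc c hic (leq_ltn_trans hcp hpk) r); rewrite hcr.
have callk : call nw k by apply/(callP Hn); exists l.
have park : par nw k = ~~ (b0 (+) b).
  apply: hinv2 => //; first lia.
  move=> c' hic'; apply/negP => /andP [hc'k /(encP Hn) [_ [r [hr _]]]].
  by move: (hnc c' hic' hc'k r); rewrite hr.
have dblock p q : k <= p -> p < q -> q <= l ->
    (p = k \/ q = l \/ forall c', k < c' -> ~~ enc nw p q c') -> d nw p q = ~~ (b0 (+) b).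
  move=> hkp hpq hql hor; rewrite -park; apply: d_maxW => //.
  apply/andP; split; first by apply/(encP Hn); split => //; exists l.
  apply/hasP => -[c' _ /andP [hkc' /(encP Hn) [hc'p [r' [hr' hqr']]]]].
  case: hor => [hpk|[hql'|hno]].
  - lia.
  - case: (ltngtP c' l) => h.
    + have := inside Hn hkl hr' hkc' h; lia.
    + lia.
    + by rewrite h in hr'; case: (notboth Hn hkl hr').
  - by move: (hno c' hkc'); rewrite (introT (encP Hn _ _ _) (conj hc'p (ex_intro _ r' (conj hr' hqr')))).
apply: tiso_trans; first exact: tiso_join.
apply: tiso_trans; last apply: (@PS_split _ nw _ b _ (l.+1) _); [|lia|lia|]; last first.
  move=> p q hip hpl hlq hqj; apply: (semb_goal (leq_trans hpl hlq)).
  rewrite /sv hinv1; [by rewrite addbA addbb|lia|lia|lia|].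
  move=> c hic; case: (leqP c l) => hcl'; first by apply: noenc_r.
  by apply/negP => /(encP Hn) [hcp _]; lia.
apply: tiso_sum; last first.
  apply: IH; try lia.
  - move=> c r hcr; have [hcr1 hrn] := N1 Hn hcr.
    apply/idP/idP => /andP [h1 h2].
      have := hcl c r hcr; rewrite h2 (leq_trans hik (leq_trans (ltnW hkl1) (ltnW h1))).
      by move/esym => /andP [_ ->]; rewrite (leq_trans h1 (ltnW hcr1)).
    have := hcl c r hcr; rewrite h2 (leq_trans hik (leq_trans (ltnW hkl1) (ltnW h1))).
    move=> /= /andP [hic ->]; rewrite andbT ltnNge; apply/negP => hcl'.
    by have := K c r hic hcl' hcr; lia.
  split.
    move=> p q hip hpq hqj hno; apply: hinv1 => //; first lia.
    move=> c hic; case: (leqP c l) => hcl'; first by apply: noenc_r; lia.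
    by apply: hno.
  move=> c hic hcj hc hno; apply: hinv2 => //; first lia.
  move=> c' hic'; case: (leqP c' l) => hcl'; last by apply: hno.
  apply/negP => /andP [_ /(encP Hn) [_ [r [hr hcr]]]].
  by have := K c' r hic' hcl' hr; lia.
apply: tiso_trans; first exact: tiso_join.
apply: tiso_trans; last apply: (@PS_split _ nw _ b _ (k) _); [|lia|lia|]; last first.
  move=> p q hip hpk hkq hql; apply: (semb_goal (leq_trans hpk hkq)).
  rewrite /sv hinv1; [by rewrite addbA addbb|lia|lia|lia|].
  by apply: noenc_l.
apply: tiso_sum.
  apply: chain_PS; try lia; last exact: semb_refl.
  move=> p q hip hpq hqk; apply: (semb_goal hpq).
  rewrite /sv hinv1; [by rewrite addbA addbb|lia|lia|lia|].
  by apply: noenc_l; lia.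
apply: tiso_trans; first exact: tiso_join.
apply: tiso_trans; last apply: (@PS_split _ nw _ (~~ b) _ (l) _); [|lia|lia|]; last first.
  move=> p q hkp hpl hlq hql; have -> : q = l by lia.
  apply: (semb_goal hpl); rewrite /sv dblock; [by rewrite addbN addbA addbb|lia|lia|lia|by right; left].
apply: tiso_sum; last first.
  apply: chain_PS; try lia; last exact: semb_refl.
apply: tiso_trans; first exact: tiso_join.
apply: tiso_trans; last apply: (@PS_split _ nw _ (~~ b) _ (k.+1) _); [|lia|lia|]; last first.
  move=> p q hkp hpk hkq hql; have -> : p = k by lia.
  apply: (semb_goal hkq); rewrite /sv dblock; [by rewrite addbN addbA addbb|lia|lia|lia|by left].
apply: tiso_sum.
  apply: chain_PS; try lia; last exact: semb_refl.
apply: IH; try lia.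
- move=> c r hcr; have [hcr1 hrn] := N1 Hn hcr.
  apply/idP/idP => /andP [h1 h2].
    rewrite (ltn_trans h1 hcr1) /=; have := inside Hn hkl hcr h1 h2; done.
  rewrite (ltn_trans hcr1 h2) andbT ltnNge; apply/negP => hck.
  have hic : i <= c.
    have := hcl c r hcr; rewrite (leq_trans hik (ltnW h1)) (ltn_trans h2 hlj) /=.
    by case/andP.
  case: (ltngtP c k) => h.
  + by move: (hnc c hic h r); rewrite hcr.
  + lia.
  + by rewrite h in hcr; rewrite (N2 Hn hcr hkl) ltnn in h2.
split.
  move=> p q hkp hpq hql hno; rewrite addbN; apply: dblock; try lia.
  by right; right.
move=> c hkc hcl' hc hno; rewrite addbN negbK -[b0 (+) b]negbK -park.
apply: par_maxSE => //; apply/andP; split.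
  apply/andP; split; first lia.
  by apply/(encP Hn); split; [lia | exists l; split => //].
apply/hasP => -[c'' _ /andP [hc'' hse]].
by move: (hno c'' hc''); rewrite hse.
Qed.
End Main.
Section FO.
Variable Delta : finType.
Local Notation fo1 := (fo Delta 1).
Definition v0 {k} : 'I_k.+1 := ord0.
Definition Sv {k} (j : 'I_k) : 'I_k.+1 := lift ord0 j.
Definition X0 : 'I_1 := ord0.

Lemma env_ext0 (T : Type) k (v : 'I_k -> T) p : env_ext v p v0 = p.
Proof. by rewrite /env_ext /v0 unlift_none. Qed.
Lemma env_extS (T : Type) k (v : 'I_k -> T) p j : env_ext v p (Sv j) = v j.
Proof. by rewrite /env_ext /Sv liftK. Qed.
Lemma env2_0 (T : Type) (x y : T) : env2 x y v0 = x.
Proof. by []. Qed.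
Lemma env2_1 (T : Type) (x y : T) : env2 x y (Sv v0) = y.
Proof. by []. Qed.

Definition FOr k (f g : fo1 k) := FNot (FAnd (FNot f) (FNot g)).
Definition FImp k (f g : fo1 k) := FNot (FAnd f (FNot g)).
Definition FIff k (f g : fo1 k) := FAnd (FImp f g) (FImp g f).
Definition FAll k (f : fo1 k.+1) := FNot (FEx (FNot f)).
Definition Le k (x y : 'I_k) : fo1 k := @FLe Delta 1 k x y.
Definition EqF k (x y : 'I_k) : fo1 k := @FEq Delta 1 k x y.
Definition Nu k (x y : 'I_k) : fo1 k := @FNu Delta 1 k x y.
Definition InX k (x : 'I_k) : fo1 k := @FIn Delta 1 k x X0.
Definition Lt k (x y : 'I_k) : fo1 k := FAnd (Le x y) (FNot (EqF x y)).

Definition encF k (p q c : 'I_k) : fo1 k :=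
  FAnd (Le c p) (FEx (FAnd (Nu (Sv c) v0) (Le (Sv q) v0))).
Definition dF k (p q : 'I_k) : fo1 k :=
  FEx (FAnd (encF (Sv p) (Sv q) v0) (FAnd (InX v0)
     (FNot (FEx (FAnd (Lt (Sv v0) v0) (encF (Sv (Sv p)) (Sv (Sv q)) v0)))))).
Definition SEF k (c c' : 'I_k) : fo1 k :=
  FAnd (Lt c' c) (FAnd (Le c' c) (FEx (FAnd (Nu (Sv c') v0) (Lt (Sv c) v0)))).
Definition maxSEF k (c c' : 'I_k) : fo1 k :=
  FAnd (SEF c c') (FNot (FEx (FAnd (Lt (Sv c') v0) (SEF (Sv c) v0)))).
Definition callF k (c : 'I_k) : fo1 k := FEx (Nu (Sv c) v0).
Definition thetaF : fo1 0 :=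
  FAll (FIff (InX v0) (FAnd (callF v0) (FNot (FEx (FAnd (maxSEF (Sv v0) v0) (InX v0)))))).
Definition svF k (b0 : bool) (p q : 'I_k) : fo1 k := if b0 then FNot (dF p q) else dF p q.
Definition le2F (b0 : bool) : fo1 2 :=
  FOr (EqF v0 (Sv v0)) (FOr (FAnd (Lt v0 (Sv v0)) (svF b0 v0 (Sv v0)))
                          (FAnd (Lt (Sv v0) v0) (FNot (svF b0 (Sv v0) v0)))).
Definition schemeb (b0 : bool) : scheme Delta 1 :=
  Scheme thetaF (EqF v0 v0) (fun a => FLab 1 a v0) (Le v0 (Sv v0)) (le2F b0).

Variable nw : nword Delta.
Local Notation w := (nw_word nw).
Local Notation n := (size (nw_word nw)).
Local Notation nu := (nw_nest nw).
Hypothesis Hn : is_nesting n nu.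

Lemma has_iota_ex (P : pred nat) : has P (iota 0 n) = [exists r : 'I_n, P r].
Proof.
apply/hasP/existsP => [[r hr hP]|[r hP]].
  by rewrite mem_iota add0n in hr; exists (Ordinal hr).
by exists (nat_of_ord r) => //; rewrite mem_iota add0n ltn_ord.
Qed.

Variable T : 'I_1 -> {set 'I_n}.

Lemma satEx k (f : fo1 k.+1) v : sat T (FEx f) v = [exists p, sat T f (env_ext v p)].
Proof. by []. Qed.
Lemma satAnd k (f g : fo1 k) v : sat T (FAnd f g) v = sat T f v && sat T g v.
Proof. by []. Qed.
Lemma satNot k (f : fo1 k) v : sat T (FNot f) v = ~~ sat T f v.
Proof. by []. Qed.
Lemma satIn k (x : 'I_k) v : sat T (InX x) v = (v x \in T X0).
Proof. by []. Qed.
Lemma satLe k (x y : 'I_k) v : sat T (Le x y) v = (v x <= v y).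
Proof. by []. Qed.
Lemma satLt k (x y : 'I_k) v : sat T (Lt x y) v = (v x < v y).
Proof. by rewrite /= -(inj_eq val_inj) /= andbC -ltn_neqAle. Qed.
Lemma satEq k (x y : 'I_k) v : sat T (EqF x y) v = (v x == v y).
Proof. by []. Qed.
Lemma satNu k (x y : 'I_k) v : sat T (Nu x y) v = nu (v x) (v y).
Proof. by []. Qed.

Lemma sat_enc k (p q c : 'I_k) v :
  sat T (encF p q c) v = enc nw (v p) (v q) (v c).
Proof.
rewrite /= /enc has_iota_ex; congr andb; apply: eq_existsb => r.
by rewrite !env_ext0 !env_extS.
Qed.

Hypothesis HT : forall c : 'I_n, (c \in T X0) = call nw c && par nw c.

Lemma sat_d k (p q : 'I_k) v : sat T (dF p q) v = d nw (v p) (v q).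
Proof.
rewrite /d has_iota_ex /dF satEx; apply: eq_existsb => c.
rewrite satAnd sat_enc satAnd satIn satNot satEx !env_ext0 !env_extS HT /maxW.
under eq_existsb => c' do rewrite satAnd satLt sat_enc !env_ext0 !env_extS.
case he: (enc nw (v p) (v q) c) => //=.
have -> : call nw c.
  by case/(encP Hn): he => _ [r [hr _]]; apply/(callP Hn); exists r.
by rewrite /= env_ext0 has_iota_ex andbC.
Qed.

Lemma sat_sv k b0 (p q : 'I_k) v : sat T (svF b0 p q) v = sv nw b0 (v p) (v q).
Proof. by rewrite /svF /sv; case: b0; rewrite ?satNot sat_d. Qed.

Lemma sat_le2 b0 x y : sat T (le2F b0) (env2 x y) = semb nw b0 x y.
Proof.
rewrite /le2F /FOr !satNot !satAnd !satNot !satAnd !satNot.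
rewrite (satAnd (Lt v0 (Sv v0))) (satAnd (Lt (Sv v0) v0)) satNot !sat_sv !satLt satEq.
rewrite !env2_0 !env2_1 /semb -(inj_eq val_inj) /=.
case: eqP => [->|hne] //=; rewrite ?negbK ?ltnn //=.
by case: (ltngtP x y) => h //=; rewrite ?andbT !negbK.
Qed.
End FO.
Section Final.
Variable Delta : finType.
Variable nw : nword Delta.
Local Notation w := (nw_word nw).
Local Notation n := (size (nw_word nw)).
Local Notation nu := (nw_nest nw).
Hypothesis Hn : is_nesting n nu.
Variable T : 'I_1 -> {set 'I_n}.

Lemma satIff k (f g : fo Delta 1 k) v : sat T (FIff f g) v = (sat T f v == sat T g v).
Proof. by rewrite /FIff /FImp /=; case: (sat T f v); case: (sat T g v). Qed.

Lemma satSE k (c c' : 'I_k) v : sat T (SEF Delta c c') v = SE nw (v c) (v c').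
Proof.
rewrite /SEF /SE (satAnd T (Lt _ _ _)) (satLt T c') (satAnd T (Le _ _ _)) satLe satEx.
rewrite /enc has_iota_ex; congr (_ && (_ && _)); apply: eq_existsb => r.
by rewrite (satAnd T (Nu _ _ _)) satNu satLt !env_ext0 !env_extS.
Qed.

Lemma satmaxSE k (c c' : 'I_k) v : sat T (maxSEF Delta c c') v = maxSE nw (v c) (v c').
Proof.
rewrite /maxSEF (satAnd T (SEF _ _ _)) satSE satNot satEx /maxSE has_iota_ex.
congr (_ && ~~ _); apply: eq_existsb => c''.
by rewrite (satAnd T (Lt _ _ _)) satLt satSE !env_ext0 !env_extS.
Qed.

Lemma satcall k (c : 'I_k) v : sat T (callF Delta c) v = call nw (v c).
Proof.
rewrite /callF satEx /call has_iota_ex; apply: eq_existsb => r.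
by rewrite satNu env_ext0 env_extS.
Qed.

Lemma sat_theta b0 : theta_holds (schemeb Delta b0) T =
  [forall c : 'I_n, (c \in T (X0)) ==
     (call nw c && ~~ [exists c' : 'I_n, maxSE nw c c' && (c' \in T X0)])].
Proof.
rewrite /theta_holds -[sc_theta _]/(thetaF Delta) /thetaF /FAll satNot satEx -[RHS]negbK [X in _ = ~~ X]negb_forall.
congr negb.
under eq_existsb => c do rewrite satNot satIff satIn (satAnd T (callF _ _)) satcall satNot satEx env_ext0.
apply: eq_existsb => c.
under eq_existsb => c' do rewrite (satAnd T (maxSEF _ _ _)) satmaxSE satIn env_ext0 env_extS env_ext0.
by [].
Qed.

Lemma theta_unique b0 : theta_holds (schemeb Delta b0) T ->
  forall c : 'I_n, (c \in T X0) = call nw c && par nw c.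
Proof.
rewrite sat_theta => /forallP H.
suff: forall m (c : 'I_n), c < m -> (c \in T X0) = call nw c && par nw c.
  by move=> hs c; apply: (hs c.+1).
elim=> // m IH c hcm; rewrite (eqP (H c)) (par_eq nw) has_iota_ex.
congr (_ && ~~ _); apply: eq_existsb => c'.
case h: (maxSE nw c c') => //=.
case/andP: h => /andP [hc'c /(encP Hn) [_ [r [hr _]]]] _.
rewrite IH; last lia.
by have -> : call nw c' by apply/(callP Hn); exists r.
Qed.

Lemma def_PS b0 : theta_holds (schemeb Delta b0) T ->
  tiso (def_str (schemeb Delta b0) T) (PS nw (semb nw b0) 0 n).
Proof.
move=> hth; have HT := theta_unique hth.
have hp (x : 'I_n) : 0 <= x < n by rewrite ltn_ord.
exists (fun x => exist _ (val x) (hp (val x))); split.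
  apply: inj_surj_bij.
    by move=> x y /(congr1 val) /= e; apply: val_inj.
  case=> p hp'.
  have hd : sat T (sc_delta (schemeb Delta b0)) (env1 p) by rewrite /= eqxx.
  by exists (exist _ p hd); apply: val_inj.
split; first by [].
split=> x y; first by [].
by rewrite /= -(sat_le2 Hn HT).
Qed.
End Final.

Lemma theta_exists (Delta : finType) (nw : nword Delta) (Hn : is_nesting (size (nw_word nw)) (nw_nest nw)) b0 : theta_holds (schemeb Delta b0)
  (fun _ => [set c : 'I_(size (nw_word nw)) | call nw c && par nw c]).
Proof.
rewrite sat_theta; apply/forallP => c; rewrite inE; apply/eqP.
rewrite (par_eq nw) has_iota_ex; congr (_ && ~~ _); apply: eq_existsb => c'.
rewrite inE; case h: (maxSE nw c c') => //=.
case/andP: h => /andP [hc'c /(encP Hn) [_ [r [hr _]]]] _.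
by have -> : call nw c' by apply/(callP Hn); exists r.
Qed.


Theorem main_b (Delta : finType) (b0 : bool) :
  unamb_FO_definable (fun nw : nword Delta =>
     tstr_of_opt (phi nw (size (nw_word nw)) b0 0 (size (nw_word nw)))).
Proof.
exists 1, (schemeb Delta b0); split.
  move=> nw [_ Hn] T T' h h' _.
  apply: functional_extensionality => X.
  have -> : X = X0 by apply: val_inj; case: X => -[].
  by apply/setP => c; rewrite (theta_unique Hn h) (theta_unique Hn h').
move=> nw [_ Hn]; split; first by exists (fun _ => [set c : 'I_(size (nw_word nw)) | call nw c && par nw c]); exact: theta_exists.
move=> T hT; apply: tiso_trans (def_PS Hn hT) _; apply: tiso_sym.
apply: phi_PS => //.
- by rewrite subn0.
- by move=> c r hcr; have [h1 h2] := N1 Hn hcr; rewrite /= h2 (ltn_trans h1 h2).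
split.
  move=> p q _ hpq hqn hno; rewrite addbb; apply/hasP => -[c _ /andP [/andP [he _] _]].
  by move: (hno c (leq0n c)); rewrite he.
move=> c _ hcn hc hno; rewrite addbb (par_eq nw); congr negb.
apply/hasP => -[c' _ /andP [/andP [hse _] _]].
by move: (hno c' (leq0n c')); rewrite hse.
Qed.

Theorem corollary5p4 (Delta : finType) :
  unamb_FO_definable (@PhiC Delta) /\ unamb_FO_definable (@PhiB Delta).
Proof. split; [exact: (main_b Delta true) | exact: (main_b Delta false)]. Qed.
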